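(* Let $p$ be a prime and let $\lambda$ be an element of order $k\geq 3$ in the multiplicative group $\mathbb{F}_p^*$. Then $$\rho(\lambda,p)\geq p^{1/\phi(k)}/\sqrt{8},$$ where $\phi$ is Euler's totient function.
   Context: For $\mathbf{h}=(h_1,h_2)\in\mathbb{Z}^2$ let $r(\mathbf{h})=\max\{1,|h_1|\}\cdot\max\{1,|h_2|\}$. For $\lambda\in\{1,\dots,p-1\}$ define $\rho(\lambda,p)=\min r(\mathbf{h})$, the minimum taken over all nonzero $\mathbf{h}=(h_1,h_2)\in\mathbb{Z}^2$ satisfying $h_1+h_2\lambda\equiv 0\pmod p$ (here $\lambda$ is identified with an integer representative). *)

(* Defs.v *)
From Stdlib Require Import Reals ClassicalEpsilon.
From mathcomp Require Import all_boot all_order all_algebra.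
Set Implicit Arguments. Unset Strict Implicit. Unset Printing Implicit Defensive.
Import GRing.Theory Num.Theory.

Local Open Scope ring_scope.

Definition rfun (h1 h2 : int) : nat := (maxn 1 (absz h1) * maxn 1 (absz h2))%N.

Definition admissible (p : nat) (lam h1 h2 : int) : Prop :=
  (h1 != 0 \/ h2 != 0) /\ (p%:Z %| h1 + h2 * lam)%Z.

Definition rho_val (p : nat) (lam : int) (m : nat) : Prop :=
  exists h1 h2 : int, admissible p lam h1 h2 /\ rfun h1 h2 = m.

Definition rho_valb (p : nat) (lam : int) (m : nat) : bool :=
  if excluded_middle_informative (rho_val p lam m) then true else false.

Lemma rho_valbP p lam m : rho_valb p lam m = true <-> rho_val p lam m.
Proof.
rewrite /rho_valb; case: excluded_middle_informative => //; split => // /[swap].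
Qed.

Lemma rho_val_ex (p : nat) (lam : int) (hp : (0 < p)%N) :
  exists m, rho_valb p lam m.
Proof.
suff [m hm] : exists m, rho_val p lam m by exists m; apply/rho_valbP.
exists (rfun (Posz p) 0); exists (Posz p), 0; split => //; split.
- by left; rewrite eqz_nat -lt0n.
- by rewrite mul0r addr0 dvdzz.
Qed.

Definition rho (p : nat) (lam : int) (hp : (0 < p)%N) : nat :=
  ex_minn (rho_val_ex lam hp).

Definition has_order_mod (p : nat) (lam : int) (k : nat) : Prop :=
  (0 < k)%N /\ (lam ^+ k == 1 %[mod p%:Z])%Z /\
  (forall j : nat, (0 < j)%N -> (j < k)%N -> ~~ (lam ^+ j == 1 %[mod p%:Z])%Z).

(* Main.v *)
Require Import Defs.
From Stdlib Require Import Reals.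
From mathcomp Require Import all_boot all_order all_algebra.
From mathcomp Require Import all_field.
From mathcomp Require Import ring zify.
From Stdlib Require Import Lia Lra.

Section Helpers.
Local Set Implicit Arguments.
Local Unset Strict Implicit.
Import Order.TTheory GRing.Theory Num.Theory.
Local Open Scope ring_scope.

Lemma prod_const_seq (R : comNzRingType) (T : Type) (r : seq T) (c : R) :
  \prod_(w <- r) c = c ^+ size r.
Proof. by elim: r => [|x r IH]; rewrite ?big_nil ?big_cons ?IH ?exprS. Qed.

Lemma prim_norm1 (k : nat) (w : algC) : k.-primitive_root w -> `|w| = 1.
Proof.
move=> pw; have k0 := prim_order_gt0 pw.
have := prim_expr_order pw => /(congr1 (fun x => `|x|)); rewrite normrX normr1.
by move/eqP; rewrite pexpr_eq1 // => /eqP.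
Qed.

Lemma C_part (k : nat) (k3 : (2 < k)%N) (a b : int) (b0 : b != 0) :
  let n := totient k in
  let N := \sum_(i < n.+1) ('Phi_k)`_i * a ^+ i * b ^+ (n - i) in
  N != 0 /\ (`|N| <= (`|a| + `|b|) ^+ n)%R.
Proof.
move=> n N.
have k0 : (0 < k)%N by apply: leq_trans k3.
have [z pz] := C_prim_root_exists k0.
set P := map_poly (intr : int -> algC) 'Phi_k.
have DP : P = cyclotomic z k by rewrite /P (Cintr_Cyclotomic pz).
have sP : size P = n.+1 by rewrite DP size_cyclotomic.
have rootP w : root P w -> k.-primitive_root w by rewrite DP root_cyclotomic.
have [r Dr] := closed_field_poly_normal P.
have lP : lead_coef P = 1.
  by rewrite DP; apply/monicP; exact: cyclotomic_monic.
rewrite lP scale1r in Dr.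
have sr : size r = n by have := sP; rewrite Dr size_prod_XsubC => -[].
pose A : algC := a%:~R; pose B : algC := b%:~R.
have B0 : B != 0 by rewrite intr_eq0.
have NE : (N%:~R : algC) = B ^+ n * P.[A / B].
  rewrite /N rmorph_sum /= (horner_coef P) sP mulr_sumr; apply: eq_bigr => i _.
  rewrite !rmorphM !rmorphXn /= /P coef_map /= -/A -/B.
  have hi : (i <= n)%N by rewrite -ltnS ltn_ord.
  have -> : B ^+ n = B ^+ (n - i) * B ^+ i by rewrite -exprD subnK.
  rewrite exprMn exprVn.
  have Bi : B ^+ i != 0 by rewrite expf_neq0.
  by field.
have real_y : A / B \is Num.real by rewrite rpredM ?rpredV ?realz.
split.
  rewrite -(intr_eq0 algC) NE mulf_eq0 negb_or expf_neq0 //=.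
  apply/negP => /rootP py.
  have := prim_norm1 py => ny.
  have := real_normK real_y; rewrite ny expr1n => /esym/eqP.
  by rewrite -(prim_order_dvd py) => /(dvdn_leq (isT : (0 < 2)%N)); rewrite leqNgt k3.
rewrite -(ler_int algC) intr_norm NE rmorphXn rmorphD /= !intr_norm -/A -/B.
rewrite normrM normrX Dr horner_prod normr_prod.
have -> : (`|A| + `|B|) = `|B| * (`|A / B| + 1).
  by rewrite mulrDr mulr1 normrM normrV ?unitfE // mulrCA mulfV ?normr_eq0 // mulr1 addrC.
rewrite exprMn ler_wpM2l ?exprn_ge0 // -sr -prod_const_seq !big_seq.
apply: ler_prod => w wr; rewrite normr_ge0 /= hornerXsubC.
have pw : k.-primitive_root w by apply: rootP; rewrite Dr root_prod_XsubC.
by rewrite (le_trans (ler_normB _ _)) // (prim_norm1 pw).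
Qed.

Lemma intr_Fp_eq0 (p : nat) (hp : prime p) (z : int) :
  ((z%:~R : 'F_p) == 0) = (p%:Z %| z)%Z.
Proof.
by rewrite -(dvdz_pcharf (pchar_Fp hp)).
Qed.

Lemma Fp_Phi_root (p : nat) (hp : prime p) (x : 'F_p) (k : nat) :
  (0 < k)%N -> x ^+ k = 1 -> (forall j, (0 < j)%N -> (j < k)%N -> x ^+ j != 1) ->
  (map_poly intr ('Phi_k)).[x] = 0.
Proof.
move=> k0 xk xj.
have hX : forall n, (0 < n)%N -> \prod_(d <- divisors n) (map_poly intr 'Phi_d).[x] = x ^+ n - 1.
  move=> n n0; rewrite -horner_prod -rmorph_prod /= prod_Cyclotomic //.
  by rewrite rmorphB /= map_polyXn rmorph1 !hornerE.
have := hX k k0; rewrite xk subrr => /eqP; rewrite prodf_seq_eq0 => /hasP[d dk /eqP hd].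
have dk' : (d %| k)%N by rewrite dvdn_divisors.
have d0 : (0 < d)%N by apply: dvdn_gt0 dk'.
case: (ltngtP d k) => [dlt|dgt|deq]; last by rewrite -deq.
  2: by have := dvdn_leq k0 dk'; rewrite leqNgt dgt.
have := hX d d0; rewrite (big_rem d) -?dvdn_divisors //= => H.
have : x ^+ d - 1 == 0 by rewrite -H mulf_eq0; apply/orP; left; apply/eqP; exact: hd.
by rewrite subr_eq0 (negbTE (xj d d0 dlt)).
Qed.

Lemma key (p : nat) (hpr : prime p) (lam : int) (k : nat)
  (hord : has_order_mod p lam k) (hk : (3 <= k)%N) (h1 h2 : int) :
  admissible p lam h1 h2 -> (p <= (2 * rfun h1 h2) ^ totient k)%N.
Proof.
move=> [hnz hdv].
set n := totient k.
have n0 : (0 < n)%N by rewrite totient_gt0; apply: leq_trans hk.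
have hr : (`|h1| + `|h2| <= 2 * rfun h1 h2)%N.
  rewrite /rfun.
  have e1 : (`|h1| <= maxn 1 `|h1|)%N by rewrite leq_maxr.
  have e2 : (`|h2| <= maxn 1 `|h2|)%N by rewrite leq_maxr.
  have f1 : (1 <= maxn 1 `|h1|)%N by rewrite leq_maxl.
  have f2 : (1 <= maxn 1 `|h2|)%N by rewrite leq_maxl.
  move: e1 e2 f1 f2; set X := maxn 1 _; set Y := maxn 1 _; nia.
have hr2 : (2 * rfun h1 h2 <= (2 * rfun h1 h2) ^ n)%N.
  have : (1 <= 2 * rfun h1 h2)%N by rewrite /rfun muln_gt0 !muln_gt0 !leq_maxl.
  move: (2 * rfun h1 h2)%N => t t1.
  by rewrite -{1}(expn1 t) leq_pexp2l.
have [h20|h2n0] := eqVneq h2 0.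
  rewrite h20 mul0r addr0 in hdv hnz; case: hnz => [hnz|//].
  apply: leq_trans hr2; apply: leq_trans hr; apply: leq_trans (leq_addr _ _).
  by apply: dvdn_leq; [rewrite absz_gt0 | exact: hdv].
have k2 : (2 < k)%N by [].
have [Nnz Nle] := C_part k2 (- h1) h2n0.
set N := \sum_(i < n.+1) _ in Nnz Nle.
have pN : (p%:Z %| N)%Z.
  rewrite -(intr_Fp_eq0 hpr); apply/eqP.
  pose x : 'F_p := lam%:~R.
  have hx : x ^+ k = 1.
    case: hord => _ [hk1 _]; apply/eqP; rewrite -subr_eq0.
    have := hk1; rewrite eqz_mod_dvd -(intr_Fp_eq0 hpr).
    by rewrite rmorphB rmorphXn rmorph1.
  have hxj j : (0 < j)%N -> (j < k)%N -> x ^+ j != 1.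
    move=> j0 jk; case: hord => _ [_ /(_ j j0 jk) hj]; apply: contra hj => /eqP hj.
    by rewrite eqz_mod_dvd -(intr_Fp_eq0 hpr) rmorphB rmorphXn rmorph1 /= hj subrr.
  have k0 : (0 < k)%N by apply: leq_trans hk.
  have hroot := Fp_Phi_root hpr k0 hx hxj.
  have hh1 : ((- h1)%:~R : 'F_p) = h2%:~R * x.
    apply/eqP; rewrite rmorphN /= eq_sym -subr_eq0 opprK.
    by rewrite -rmorphM -rmorphD /= addrC intr_Fp_eq0.
  rewrite /N rmorph_sum /=.
  have sP : (size (map_poly (intr : int -> 'F_p) 'Phi_k) <= n.+1)%N.
    by rewrite (leq_trans (size_poly _ _)) // size_Cyclotomic.
  transitivity ((h2%:~R : 'F_p) ^+ n * (map_poly intr 'Phi_k).[x]); last by rewrite hroot mulr0.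
  rewrite (horner_coef_wide _ sP) mulr_sumr.
  apply: eq_bigr => i _; rewrite !rmorphM !rmorphXn /= hh1 coef_map /=.
  have hi : (i <= n)%N by rewrite -ltnS ltn_ord.
  have -> : (h2%:~R : 'F_p) ^+ n = h2%:~R ^+ (n - i) * h2%:~R ^+ i by rewrite -exprD subnK.
  rewrite exprMn; ring.
have Np : (0 < `|N|)%N by rewrite absz_gt0.
have h3 : (p <= `|N|)%N by apply: dvdn_leq.
apply: leq_trans h3 _; apply: (@leq_trans ((`|h1| + `|h2|) ^ n)); last by rewrite leq_exp2r.
rewrite -lez_nat -[X in _ <= X]natz natrX natrD !natz !abszE -(normrN h1).
exact: Nle.
Qed.

End Helpers.

Section RealPart.
Local Open Scope R_scope.

Lemma INR_expn (x n : nat) : INR (x ^ n)%N = INR x ^ n.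
Proof. by elim: n => [|n IH] //; rewrite expnS mult_INR IH. Qed.

Lemma real_part (p r n : nat) : (0 < p)%N -> (0 < n)%N -> (p <= (2 * r) ^ n)%N ->
  Rle (Rdiv (Rpower (INR p) (Rdiv (INR 1) (INR n))) (sqrt (INR 8))) (INR r).
Proof.
move=> p0 n0 H.
have r0 : (0 < r)%N.
  case: r H => // H; move: H; rewrite muln0 exp0n //; by case: p p0.
have Hp : 0 < INR p by apply: lt_0_INR; apply/ltP.
have Hr : 0 < INR (2 * r) by apply: lt_0_INR; apply/ltP; rewrite muln_gt0.
have Hn : 0 < INR n by apply: lt_0_INR; apply/ltP.
have Hle : INR p <= INR (2 * r) ^ n by rewrite -INR_expn; apply: le_INR; apply/leP.
have H1 : Rpower (INR p) (INR 1 / INR n) <= INR (2 * r).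
  have -> : INR (2 * r) = Rpower (INR (2 * r) ^ n) (INR 1 / INR n).
    rewrite -(@Rpower_pow n _ Hr) Rpower_mult.
    have -> : INR n * (INR 1 / INR n) = 1 by rewrite /= /Rdiv Rmult_1_l Rinv_r //; lra.
    by rewrite Rpower_1.
  apply: Rle_Rpower_l; last by split.
  by simpl; apply: Rlt_le; apply: Rdiv_lt_0_compat; lra.
have h8 : INR 8 = 8 by simpl; lra.
have s8 : 2 <= sqrt (INR 8).
  have <- : sqrt (2 * 2) = 2 by rewrite sqrt_square; lra.
  by apply: sqrt_le_1_alt; rewrite h8; lra.
rewrite mult_INR in H1.
have Hr' : 0 <= INR r by apply: pos_INR.
have h2 : INR 2 = 2 by simpl; lra.
rewrite h2 in H1.
set X := Rpower _ _ in H1 *.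
set S := sqrt _ in s8 *.
have -> : X / S = X * / S by [].
apply: (Rmult_le_reg_r S); first lra.
rewrite Rmult_assoc Rinv_l; last lra.
nra.
Qed.

End RealPart.

Theorem lemma4p6 (p : nat) (hpr : prime p) (lam : int) (k : nat)
  (hlam1 : (1 <= lam)%R) (hlam2 : (lam <= (p%:Z - 1))%R)
  (hord : has_order_mod p lam k) (hk : (3 <= k)%N) :
  Rle (Rdiv (Rpower (INR p) (Rdiv (INR 1) (INR (totient k)))) (sqrt (INR 8)))
      (INR (rho lam (prime_gt0 hpr))).
Proof.
rewrite /rho; case: ex_minnP => m /rho_valbP [h1 [h2 [adm <-]]] _.
apply: real_part; first exact: prime_gt0.
  by rewrite totient_gt0; apply: leq_trans hk.
have K := key hpr hord hk adm.
exact K.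
Qed.
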